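(* Let $(R,\mathfrak m)$ be a Noetherian local ring and let $T$ be an indeterminate. Then $\operatorname{gr}_{(\mathfrak m,T)}(R[T]) = \operatorname{gr}_{\mathfrak m}(R)[T]$. Moreover, via this identification, for any $T$-homogeneous ideal $I=\sum_{k\ge 0} I_k T^k$ of $R[T]$ (where each $I_k$ is an ideal of $R$), the initial ideal of $I$ with respect to $(\mathfrak m,T)$ is $\operatorname{in}_{(\mathfrak m,T)}(I)=\sum_{k\ge 0}\operatorname{in}_{\mathfrak m}(I_k)T^k$.
   Context: For a ring $A$ and ideals $J, I\subseteq A$, $\operatorname{gr}_J(A)=\bigoplus_{n\ge 0} J^n/J^{n+1}$ is the associated graded ring, and the initial (form) ideal of $I$ is $\operatorname{in}_J(I)=\bigoplus_{n\ge0} (I\cap J^n + J^{n+1})/J^{n+1}\subseteq \operatorname{gr}_J(A)$. *)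

(* Defs.v *)
From HB Require Import structures.
From mathcomp Require Import all_boot all_order all_algebra.
Set Implicit Arguments. Unset Strict Implicit. Unset Printing Implicit Defensive.
Import GRing.Theory.
Local Open Scope ring_scope.

Section IdealDefs.
Variable A : comNzRingType.

Definition is_ideal (I : A -> Prop) : Prop :=
  [/\ I 0, (forall x y, I x -> I y -> I (x + y)) & (forall r x, I x -> I (r * x))].

Definition gen_ideal (S : A -> Prop) (x : A) : Prop :=
  exists s : seq (A * A), (forall p, p \in s -> S p.2) /\ x = \sum_(p <- s) p.1 * p.2.

(* J^n : the ideal generated by all products of n elements of J (J^0 = A) *)
Definition ideal_pow (J : A -> Prop) (n : nat) : A -> Prop :=
  gen_ideal (fun x => exists t : n.-tuple A,
                        (forall y, y \in t -> J y) /\ x = \prod_(y <- t) y).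

Definition is_maximal_ideal (M : A -> Prop) : Prop :=
  [/\ is_ideal M, ~ M 1 &
      forall I, is_ideal I -> ~ I 1 -> (forall x, M x -> I x) -> forall x, I x -> M x].

Definition local_ring_with (m : A -> Prop) : Prop :=
  is_maximal_ideal m /\ forall M, is_maximal_ideal M -> forall x, M x <-> m x.

Definition noetherian : Prop :=
  forall I, is_ideal I -> exists s : seq A, forall x, I x <-> gen_ideal (fun y => y \in s) x.

(* Associated graded ring gr_J(A) = (+)_n J^n/J^{n+1}, described degreewise:
   an element of degree n is the class of some x in J^n ...                   *)
Definition gr_rep (J : A -> Prop) (n : nat) (x : A) : Prop := ideal_pow J n x.
(* ... and two representatives give the same class iff x - y in J^{n+1}.      *)
Definition gr_eq (J : A -> Prop) (n : nat) (x y : A) : Prop := ideal_pow J n.+1 (x - y).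

(* The degree-n component of in_J(I) = (+)_n (I cap J^n + J^{n+1})/J^{n+1}:
   the class of x in J^n lies in in_J(I)_n iff x in I cap J^n + J^{n+1}.       *)
Definition initial_deg (J : A -> Prop) (I : A -> Prop) (n : nat) (x : A) : Prop :=
  exists y z, [/\ I y, ideal_pow J n y, ideal_pow J n.+1 z & x = y + z].

End IdealDefs.

Definition mT_ideal (R : comNzRingType) (m : R -> Prop) : {poly R} -> Prop :=
  gen_ideal (fun p : {poly R} => (exists a, m a /\ p = a%:P) \/ p = 'X).

(* Main.v *)
Require Import Defs.
From HB Require Import structures.
From mathcomp Require Import all_boot all_order all_algebra.
From mathcomp Require Import zify.
Import GRing.Theory.
Local Open Scope ring_scope.
Set Implicit Arguments. Unset Strict Implicit.

Section Gen.
Variable A : comNzRingType.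
Implicit Types (S J I : A -> Prop).

Lemma gen_is_ideal S : is_ideal (gen_ideal S).
Proof.
split.
- by exists [::]; rewrite big_nil.
- move=> x y [s [Hs ->]] [t [Ht ->]]; exists (s ++ t); split; last by rewrite big_cat.
  by move=> p; rewrite mem_cat => /orP [] ?; [apply: Hs|apply: Ht].
- move=> r x [s [Hs ->]]; exists [seq (r * p.1, p.2) | p <- s]; split.
  + by move=> p /mapP [q Hq ->] /=; apply: Hs.
  + by rewrite big_map mulr_sumr; apply: eq_bigr => p _; rewrite mulrA.
Qed.

Lemma gen_in S x : S x -> gen_ideal S x.
Proof. by move=> Sx; exists [:: (1, x)]; rewrite big_seq1 mul1r; split => // p; rewrite inE => /eqP ->. Qed.

Lemma gen_min S I : is_ideal I -> (forall x, S x -> I x) -> forall x, gen_ideal S x -> I x.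
Proof.
move=> [I0 ID IM] HS x [s [Hs ->]].
elim: s Hs => [|p s IH] Hs; first by rewrite big_nil.
rewrite big_cons; apply: ID; first by apply: IM; apply: HS; apply: Hs; rewrite inE eqxx.
by apply: IH => q Hq; apply: Hs; rewrite inE Hq orbT.
Qed.

Lemma pow_is_ideal J n : is_ideal (ideal_pow J n).
Proof. exact: gen_is_ideal. Qed.

Lemma ideal_sum I (T : Type) (r : seq T) (F : T -> A) :
  is_ideal I -> (forall i, I (F i)) -> I (\sum_(i <- r) F i).
Proof. move=> [I0 ID IM] H; exact: (big_ind I). Qed.

Lemma pow0 J x : ideal_pow J 0 x.
Proof.
have -> : x = x * 1 by rewrite mulr1.
case: (pow_is_ideal J 0) => _ _ IM; apply: IM; apply: gen_in.
by exists [tuple]; rewrite big_nil.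
Qed.

Lemma pow1 J x : J x -> ideal_pow J 1 x.
Proof.
move=> Jx; apply: gen_in; exists [tuple x]; rewrite big_seq1; split => //.
by move=> y; rewrite inE => /eqP ->.
Qed.

Lemma powM J a b x y : ideal_pow J a x -> ideal_pow J b y -> ideal_pow J (a + b) (x * y).
Proof.
have [I0 ID IM] := pow_is_ideal J (a + b).
move=> Hx; move: y; apply: gen_min.
  split; first by rewrite mulr0.
  by move=> u v Hu Hv; rewrite mulrDr; apply: ID.
  by move=> r u Hu; rewrite mulrCA; apply: IM.
move=> y [u [Hu ->]]; move: x Hx; apply: gen_min.
  split; first by rewrite mul0r.
  by move=> u' v Hu' Hv; rewrite mulrDl; apply: ID.
  by move=> r u' Hu'; rewrite -mulrA; apply: IM.
move=> x [t [Ht ->]]; apply: gen_in; exists [tuple of t ++ u]; split.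
  by move=> z; rewrite mem_cat => /orP [] ?; [apply: Ht|apply: Hu].
by rewrite big_cat.
Qed.

Lemma powS J a x : ideal_pow J a.+1 x -> ideal_pow J a x.
Proof.
apply: gen_min; first exact: pow_is_ideal.
move=> y [t [Ht ->]]; rewrite (tuple_eta t) /= big_cons.
have [_ _ IM] := pow_is_ideal J a; apply: IM; apply: gen_in.
exists (behead_tuple t); split => //.
by move=> z Hz; apply: Ht; rewrite (tuple_eta t) inE /= Hz orbT.
Qed.

Lemma pow_mono J a b x : (b <= a)%N -> ideal_pow J a x -> ideal_pow J b x.
Proof.
move=> /subnKC <-; elim: (a - b)%N => [|d IH]; first by rewrite addn0.
by rewrite addnS => /powS.
Qed.

End Gen.

Lemma pow_map (A : comNzRingType) (B : comNzRingType) (phi : {rmorphism A -> B}) (J : A -> Prop) (J' : B -> Prop) n x :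
  (forall a, J a -> J' (phi a)) -> ideal_pow J n x -> ideal_pow J' n (phi x).
Proof.
move=> HJ; suff: forall x, ideal_pow J n x -> ideal_pow J' n (phi x) by apply.
apply: gen_min.
  have [I0 ID IM] := pow_is_ideal J' n.
  split; first by rewrite rmorph0.
  by move=> u v Hu Hv; rewrite rmorphD; apply: ID.
  by move=> r u Hu; rewrite rmorphM; apply: IM.
move=> y [t [Ht ->]]; apply: gen_in; exists (map_tuple phi t); split.
  by move=> z /mapP [w Hw ->]; apply: HJ; apply: Ht.
by rewrite rmorph_prod big_map.
Qed.


Section Poly.
Variable R : comNzRingType.
Variable m : R -> Prop.

Definition Q n (f : {poly R}) := forall k, ideal_pow m (n - k) f`_k.

Lemma Q_ideal n : is_ideal (Q n).
Proof.
split.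
- by move=> k; rewrite coef0; case: (pow_is_ideal m (n - k)).
- move=> f g Hf Hg k; rewrite coefD; case: (pow_is_ideal m (n - k)) => _ ID _.
  exact: ID.
- move=> r f Hf k; rewrite coefM; apply: ideal_sum; first exact: pow_is_ideal.
  move=> i; case: (pow_is_ideal m (n - k)) => _ _ IM; apply: IM.
  apply: (pow_mono (a := (n - (k - i))%N)); last exact: Hf.
  have := ltn_ord i; lia.
Qed.

Lemma QM a b f g : Q a f -> Q b g -> Q (a + b) (f * g).
Proof.
move=> Hf Hg k; rewrite coefM; apply: ideal_sum; first exact: pow_is_ideal.
move=> i; apply: (pow_mono (a := ((a - i) + (b - (k - i)))%N)).
  have := ltn_ord i; lia.
exact: powM.
Qed.

Lemma Q0 f : Q 0 f.
Proof. by move=> k; apply: pow0. Qed.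

Lemma Q_mT f : mT_ideal m f -> Q 1 f.
Proof.
apply: gen_min; first exact: Q_ideal.
have Z k : ideal_pow m k 0 by case: (pow_is_ideal m k).
move=> p [[a [ma ->]]|->] k.
- rewrite coefC; case: eqP => [->|_]; [exact: pow1|exact: Z].
- rewrite coefX; case: eqP => [->|_]; [exact: pow0|exact: Z].
Qed.

Lemma Q_prod (s : seq {poly R}) : (forall y, y \in s -> mT_ideal m y) -> Q (size s) (\prod_(y <- s) y).
Proof.
elim: s => [|x s IH] Hs; first by rewrite big_nil; apply: Q0.
rewrite big_cons /= -add1n; apply: QM.
  by apply: Q_mT; apply: Hs; rewrite inE eqxx.
by apply: IH => y Hy; apply: Hs; rewrite inE Hy orbT.
Qed.

Lemma Q_pow n f : ideal_pow (mT_ideal m) n f -> Q n f.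
Proof.
apply: gen_min; first exact: Q_ideal.
move=> p [t [Ht ->]]; have := Q_prod Ht; by rewrite size_tuple.
Qed.

Lemma X_pow k : ideal_pow (mT_ideal m) k 'X^k.
Proof.
elim: k => [|k IH]; first exact: pow0.
rewrite exprS -add1n; apply: powM => //; apply: pow1; apply: gen_in; by right.
Qed.

Lemma pow_Q n f : Q n f -> ideal_pow (mT_ideal m) n f.
Proof.
move=> Hf; rewrite -[f]coefK poly_def; apply: ideal_sum; first exact: pow_is_ideal.
move=> i; rewrite -mul_polyC.
apply: (pow_mono (a := ((n - i) + i)%N)); first lia.
apply: powM; last exact: X_pow.
apply: (@pow_map R _ polyC m); last exact: Hf.
by move=> a ma; apply: gen_in; left; exists a.
Qed.

Lemma Q_iff n f : ideal_pow (mT_ideal m) n f <-> Q n f.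
Proof. split; [exact: Q_pow|exact: pow_Q]. Qed.

End Poly.

Lemma choose_seq (T : Type) (x0 : T) (P : nat -> T -> Prop) N :
  (forall k, (k < N)%N -> exists y, P k y) ->
  exists s : seq T, size s = N /\ forall k, (k < N)%N -> P k (nth x0 s k).
Proof.
elim: N => [|N IH] H; first by exists [::].
have [s [ss Hs]] : exists s : seq T, size s = N /\ forall k, (k < N)%N -> P k (nth x0 s k).
  by apply: IH => k kN; apply: H; lia.
have [y Py] := H N (ltnSn N).
exists (rcons s y); split; first by rewrite size_rcons ss.
move=> k kN; rewrite nth_rcons ss; case: ltnP => k1; first exact: Hs.
have -> : k = N by lia.
by rewrite eqxx.
Qed.

Theorem lemma2p4 (R : comNzRingType) (m : R -> Prop) :
  noetherian R -> local_ring_with m ->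
  (forall (n : nat) (f : {poly R}),
      gr_rep (mT_ideal m) n f <-> (forall k : nat, gr_rep m (n - k) f`_k)) /\
  (forall (n : nat) (f g : {poly R}),
      gr_rep (mT_ideal m) n f -> gr_rep (mT_ideal m) n g ->
      (gr_eq (mT_ideal m) n f g <->
         (forall k : nat, (k <= n)%N -> gr_eq m (n - k) f`_k g`_k))) /\
  (forall (I : {poly R} -> Prop) (Ik : nat -> R -> Prop),
      is_ideal I -> (forall k, is_ideal (Ik k)) ->
      (forall f : {poly R}, I f <-> (forall k : nat, Ik k f`_k)) ->
      forall (n : nat) (f : {poly R}), gr_rep (mT_ideal m) n f ->
        (initial_deg (mT_ideal m) I n f <->
           (forall k : nat, (k <= n)%N -> initial_deg m (Ik k) (n - k) f`_k))).
Proof.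
move=> _ _; split; [|split].
- by move=> n f; rewrite /gr_rep Q_iff.
- move=> n f g _ _; rewrite /gr_eq Q_iff; split.
  + by move=> H k kn; have := H k; rewrite coefB subSn.
  + move=> H k; rewrite coefB; case: (leqP k n) => kn.
      by rewrite subSn //; apply: H.
    rewrite (_ : (n.+1 - k)%N = 0%N); [exact: pow0|lia].
- move=> I Ik hI hIk hIff n f _; split.
  + move=> [y [z [Iy py pz ->]]] k kn; exists y`_k, z`_k; split.
    * exact: (proj1 (hIff y) Iy k).
    * exact: (proj1 (Q_iff m n y) py k).
    * by have := (proj1 (Q_iff m n.+1 z) pz k); rewrite subSn.
    * by rewrite coefD.
  + move=> H.
    have [s [ss Hs]] := @choose_seq R 0 (fun k y => exists z, [/\ Ik k y, ideal_pow m (n - k) y, ideal_pow m (n - k).+1 z & f`_k = y + z]) n.+1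
      (fun k kn => let: ex_intro y (ex_intro z h) := H k kn in ex_intro _ y (ex_intro _ z h)).
    exists (Poly s), (f - Poly s); split.
    * apply/hIff => k; rewrite coef_Poly; case: (ltnP k n.+1) => kn.
        by have [z [? ? ? ?]] := Hs k kn.
      by rewrite nth_default ?ss //; case: (hIk k).
    * apply/Q_iff => k; rewrite coef_Poly; case: (ltnP k n.+1) => kn.
        by have [z [? ? ? ?]] := Hs k kn.
      rewrite (_ : (n - k)%N = 0%N); [exact: pow0|lia].
    * apply/Q_iff => k; rewrite coefB coef_Poly; case: (ltnP k n.+1) => kn.
        have [z [? ? ? ->]] := Hs k kn.
        by rewrite addrC addKr subSn.
      rewrite (_ : (n.+1 - k)%N = 0%N); [exact: pow0|lia].
    * by rewrite addrC subrK.
Qed.
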